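(* Let $F$ be a closed convex subset of a real Hilbert space $\mathcal H$ and let $(T_n)_{n\ge0}$ be an $F$-coherent sequence in $\mathcal U_F$. Then: (i) If $F\neq\emptyset$, then for every $\varepsilon\in(0,1]$ and every $x_0\in\mathcal H$, the sequence $x_{n+1}=x_n+(2-\varepsilon)(T_nx_n-x_n)$ converges weakly to a point of $F$. (ii) For $x_0\in\mathcal H$, consider the iteration $x_{n+1}=Q(x_0,x_n,T_nx_n)$, which terminates at step $n$ if $H(x_0,x_n)\cap H(x_n,T_nx_n)=\emptyset$. Exactly one of the following holds: (a) $F\neq\emptyset$ and $x_n\to P_Fx_0$ strongly; (b) $F=\emptyset$ and $\|x_n\|\to+\infty$; (c) $F=\emptyset$ and the iteration terminates.
   Context: For $x,y\in\mathcal H$, $H(x,y)=\{z\in\mathcal H:\ \langle z-y,x-y\rangle\le0\}$; $Q(x,y,z)$ is the metric projection of $x$ onto $H(x,y)\cap H(y,z)$. $\mathcal U_F$ is the set of maps $T:\mathcal H\to\mathcal H$ with $F\subset H(x,Tx)$ for every $x\in\mathcal H$. A sequence $(T_n)\subset\mathcal U_F$ is $F$-coherent if for every bounded sequence $(z_n)$ in $\mathcal H$ with $\sum_n\|z_{n+1}-z_n\|^2<\infty$ and $\sum_n\|z_n-T_nz_n\|^2<\infty$, every weak cluster point of $(z_n)$ lies in $F$. $P_F$ is the metric projection onto $F$. *)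

(* Defs.v *)
From Stdlib Require Import Reals.
Open Scope R_scope.

Record Hilbert := {
  hcar :> Type;
  hzero : hcar;
  hadd : hcar -> hcar -> hcar;
  hopp : hcar -> hcar;
  hscal : R -> hcar -> hcar;
  hinner : hcar -> hcar -> R;
  hadd_assoc : forall x y z, hadd x (hadd y z) = hadd (hadd x y) z;
  hadd_comm : forall x y, hadd x y = hadd y x;
  hadd_zero : forall x, hadd x hzero = x;
  hadd_opp : forall x, hadd x (hopp x) = hzero;
  hscal_one : forall x, hscal 1 x = x;
  hscal_assoc : forall a b x, hscal a (hscal b x) = hscal (a * b) x;
  hscal_distr_r : forall a x y, hscal a (hadd x y) = hadd (hscal a x) (hscal a y);
  hscal_distr_l : forall a b x, hscal (a + b) x = hadd (hscal a x) (hscal b x);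
  hinner_sym : forall x y, hinner x y = hinner y x;
  hinner_add : forall x y z, hinner (hadd x y) z = hinner x z + hinner y z;
  hinner_scal : forall a x y, hinner (hscal a x) y = a * hinner x y;
  hinner_pos : forall x, 0 <= hinner x x;
  hinner_def : forall x, hinner x x = 0 -> x = hzero;
  hcomplete : forall u : nat -> hcar,
    (forall eps, eps > 0 -> exists N, forall m n, (m >= N)%nat -> (n >= N)%nat ->
        sqrt (hinner (hadd (u m) (hopp (u n))) (hadd (u m) (hopp (u n)))) < eps) ->
    exists l, forall eps, eps > 0 -> exists N, forall n, (n >= N)%nat ->
        sqrt (hinner (hadd (u n) (hopp l)) (hadd (u n) (hopp l))) < eps
}.

Arguments hzero {h}.
Arguments hadd {h}.
Arguments hopp {h}.
Arguments hscal {h}.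
Arguments hinner {h}.

Section Defs.
Context {X : Hilbert}.

Definition hsub (x y : X) : X := hadd x (hopp y).
Definition hnorm (x : X) : R := sqrt (hinner x x).

Definition strong_cv (u : nat -> X) (l : X) : Prop :=
  Un_cv (fun n => hnorm (hsub (u n) l)) 0.

Definition weak_cv (u : nat -> X) (l : X) : Prop :=
  forall w : X, Un_cv (fun n => hinner (u n) w) (hinner l w).

Definition weak_cluster_point (u : nat -> X) (y : X) : Prop :=
  exists phi : nat -> nat, (forall n, (phi n < phi (S n))%nat) /\
    weak_cv (fun n => u (phi n)) y.

Definition hbounded_seq (u : nat -> X) : Prop :=
  exists M, forall n, hnorm (u n) <= M.

Definition summable (s : nat -> R) : Prop := exists l, infinite_sum s l.

Definition hclosed_set (F : X -> Prop) : Prop :=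
  forall (u : nat -> X) (l : X), (forall n, F (u n)) -> strong_cv u l -> F l.

Definition hconvex_set (F : X -> Prop) : Prop :=
  forall x y t, F x -> F y -> 0 <= t <= 1 ->
    F (hadd (hscal (1 - t) x) (hscal t y)).

Definition Hs (x y : X) (z : X) : Prop := hinner (hsub z y) (hsub x y) <= 0.

Definition is_proj (C : X -> Prop) (x p : X) : Prop :=
  C p /\ forall q, C q -> hnorm (hsub x p) <= hnorm (hsub x q).

Definition is_Q (x y z p : X) : Prop :=
  is_proj (fun w => Hs x y w /\ Hs y z w) x p.

Definition in_UF (F : X -> Prop) (T : X -> X) : Prop :=
  forall x z, F z -> Hs x (T x) z.

Definition coherent (F : X -> Prop) (T : nat -> X -> X) : Prop :=
  (forall n, in_UF F (T n)) /\
  forall z : nat -> X,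
    hbounded_seq z ->
    summable (fun n => hnorm (hsub (z (S n)) (z n)) ^ 2) ->
    summable (fun n => hnorm (hsub (z n) (T n (z n))) ^ 2) ->
    forall y, weak_cluster_point z y -> F y.

(* A run of the iteration x_{n+1} = Q(x0, x_n, T_n x_n) from x0.
   [N = None]: the iteration never terminates; [N = Some m]: it terminates at
   step m, i.e. steps 0..m-1 are performed and H(x0,x_m) ∩ H(x_m,T_m x_m) = ∅.
   Values of x beyond the termination step are irrelevant. *)
Definition Q_run (T : nat -> X -> X) (x0 : X) (x : nat -> X) (N : option nat) : Prop :=
  x 0%nat = x0 /\
  (forall n, (forall m, N = Some m -> (n < m)%nat) ->
      is_Q x0 (x n) (T n (x n)) (x (S n))) /\
  (forall m, N = Some m ->
      ~ exists w, Hs x0 (x m) w /\ Hs (x m) (T m (x m)) w).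

End Defs.

(* Main.v *)
Require Import Defs.
From Stdlib Require Import Reals Lra Lia Psatz Classical ClassicalEpsilon ZArith.
Open Scope R_scope.

Arguments hadd_assoc {h}. Arguments hadd_comm {h}. Arguments hadd_zero {h}.
Arguments hadd_opp {h}. Arguments hscal_one {h}. Arguments hscal_assoc {h}.
Arguments hscal_distr_r {h}. Arguments hscal_distr_l {h}. Arguments hinner_sym {h}.
Arguments hinner_add {h}. Arguments hinner_scal {h}. Arguments hinner_pos {h}.
Arguments hinner_def {h}. Arguments hcomplete {h}.

Section Alg.
Context {X : Hilbert}.
Implicit Types x y z w u v : X.

Lemma ip_zero_l y : hinner (@hzero X) y = 0.
Proof.
  pose proof (hinner_add hzero hzero y) as H. rewrite hadd_zero in H. lra.
Qed.
Lemma ip_opp_l x y : hinner (hopp x) y = - hinner x y.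
Proof.
  pose proof (hinner_add x (hopp x) y) as H. rewrite hadd_opp, ip_zero_l in H. lra.
Qed.
Lemma ip_add_r x y z : hinner x (hadd y z) = hinner x y + hinner x z.
Proof. rewrite !(hinner_sym x). apply hinner_add. Qed.
Lemma ip_scal_r a x y : hinner x (hscal a y) = a * hinner x y.
Proof. rewrite !(hinner_sym x). apply hinner_scal. Qed.
Lemma ip_opp_r x y : hinner x (hopp y) = - hinner x y.
Proof. rewrite !(hinner_sym x). apply ip_opp_l. Qed.
Lemma ip_zero_r y : hinner y (@hzero X) = 0.
Proof. rewrite hinner_sym. apply ip_zero_l. Qed.

Lemma vec_ext x y : (forall w, hinner x w = hinner y w) -> x = y.
Proof.
  intro H. assert (E : hadd x (hopp y) = hzero).
  { apply hinner_def. rewrite hinner_add, ip_opp_l, H. lra. }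
  rewrite <- (hadd_zero x), <- (hadd_opp y), (hadd_comm y), hadd_assoc, E.
  rewrite (hadd_comm hzero), hadd_zero. reflexivity.
Qed.
End Alg.

Ltac ip_simpl := unfold hsub in *; repeat (rewrite ?hinner_add, ?hinner_scal, ?ip_opp_l,
   ?ip_zero_l, ?ip_add_r, ?ip_scal_r, ?ip_opp_r, ?ip_zero_r).
Ltac ip_simpl_in H := unfold hsub in H; repeat (rewrite ?hinner_add, ?hinner_scal, ?ip_opp_l,
   ?ip_zero_l, ?ip_add_r, ?ip_scal_r, ?ip_opp_r, ?ip_zero_r in H).
Ltac vext := apply vec_ext; intro; ip_simpl; ring.

Section Norm.
Context {X : Hilbert}.
Implicit Types x y z w u v : X.

Lemma hnorm_pos x : 0 <= hnorm x.
Proof. apply sqrt_pos. Qed.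
Lemma hnorm_sq x : hnorm x * hnorm x = hinner x x.
Proof. unfold hnorm. apply sqrt_sqrt, hinner_pos. Qed.
Lemma hnorm_sq2 x : hnorm x ^ 2 = hinner x x.
Proof. rewrite <- hnorm_sq. ring. Qed.
Lemma hnorm_le x y : hinner x x <= hinner y y -> hnorm x <= hnorm y.
Proof. intro; unfold hnorm; apply sqrt_le_1_alt; auto. Qed.
Lemma hnorm_le_inv x y : hnorm x <= hnorm y -> hinner x x <= hinner y y.
Proof. intro H. rewrite <- !hnorm_sq. pose proof (hnorm_pos x). nra. Qed.
Lemma hnorm_lt_inv x y : hnorm x < hnorm y -> hinner x x < hinner y y.
Proof. intro H. rewrite <- !hnorm_sq. pose proof (hnorm_pos x). nra. Qed.
Lemma hnorm_lt x y : hinner x x < hinner y y -> hnorm x < hnorm y.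
Proof. intro H. destruct (Rlt_or_le (hnorm x) (hnorm y)); auto.
  apply hnorm_le_inv in H0. lra. Qed.
Lemma hnorm_le_c x c : 0 <= c -> hinner x x <= c * c -> hnorm x <= c.
Proof. intros Hc H. destruct (Rle_or_lt (hnorm x) c); auto.
  rewrite <- hnorm_sq in H. pose proof (hnorm_pos x). nra. Qed.
Lemma hnorm_lt_c x c : 0 <= c -> hinner x x < c * c -> hnorm x < c.
Proof. intros Hc H. destruct (Rlt_or_le (hnorm x) c); auto.
  rewrite <- hnorm_sq in H. pose proof (hnorm_pos x). nra. Qed.
Lemma hnorm_zero_iff x : hnorm x = 0 -> x = hzero.
Proof. intro H. apply hinner_def. rewrite <- hnorm_sq, H. ring. Qed.

Lemma CS_sq x y : hinner x y * hinner x y <= hinner x x * hinner y y.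
Proof.
  destruct (Req_dec (hinner y y) 0) as [E|E].
  - apply hinner_def in E. subst. rewrite !ip_zero_r. lra.
  - pose proof (hinner_pos y). assert (Hc : 0 < hinner y y) by lra.
    pose proof (hinner_pos (hadd x (hscal (- (hinner x y / hinner y y)) y))) as P.
    ip_simpl_in P. rewrite (hinner_sym y x) in P.
    set (a := hinner x x) in *. set (b := hinner x y) in *. set (c := hinner y y) in *.
    assert (P' : 0 <= a - b * b / c).
    { eapply Rle_trans; [exact P|]; right; field; lra. }
    apply (Rmult_le_compat_r c) in P'; [|lra].
    replace ((a - b*b/c)*c) with (a*c - b*b) in P' by (field; lra). lra.
Qed.

Lemma CS x y : Rabs (hinner x y) <= hnorm x * hnorm y.
Proof.
  pose proof (CS_sq x y). pose proof (hnorm_pos x). pose proof (hnorm_pos y).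
  rewrite <- !hnorm_sq in H. pose proof (Rmult_le_pos _ _ H0 H1).
  apply Rabs_le; split; nra.
Qed.
Lemma CS1 x y : hinner x y <= hnorm x * hnorm y.
Proof. pose proof (CS x y). pose proof (Rle_abs (hinner x y)). lra. Qed.
Lemma CS2 x y : - (hnorm x * hnorm y) <= hinner x y.
Proof. pose proof (CS x y). pose proof (Rle_abs (- hinner x y)). rewrite Rabs_Ropp in H0. lra. Qed.

Lemma hnorm_tri x y : hnorm (hadd x y) <= hnorm x + hnorm y.
Proof.
  apply hnorm_le_c. pose proof (hnorm_pos x); pose proof (hnorm_pos y); lra.
  ip_simpl. rewrite (hinner_sym y x). pose proof (CS1 x y).
  rewrite <- (hnorm_sq x), <- (hnorm_sq y). nra.
Qed.
Lemma hnorm_opp x : hnorm (hopp x) = hnorm x.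
Proof. unfold hnorm. ip_simpl. f_equal. ring. Qed.
Lemma hnorm_scal a x : hnorm (hscal a x) = Rabs a * hnorm x.
Proof. unfold hnorm. ip_simpl. replace (a * (a * hinner x x)) with ((a*a) * hinner x x) by ring.
  rewrite sqrt_mult_alt. f_equal. apply sqrt_Rsqr_abs.
  nra. Qed.
Lemma hnorm_sub_sym x y : hnorm (hsub x y) = hnorm (hsub y x).
Proof. unfold hnorm; ip_simpl. f_equal. ring. Qed.
Lemma hnorm_sub_tri x y z : hnorm (hsub x z) <= hnorm (hsub x y) + hnorm (hsub y z).
Proof. replace (hsub x z) with (hadd (hsub x y) (hsub y z)) by vext. apply hnorm_tri. Qed.
Lemma hnorm_zero : hnorm (@hzero X) = 0.
Proof. unfold hnorm. rewrite ip_zero_l. apply sqrt_0. Qed.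
Lemma hsub_self x : hsub x x = hzero.
Proof. apply hadd_opp. Qed.
End Norm.

Definition sincr (phi : nat -> nat) := forall n, (phi n < phi (S n))%nat.

Lemma sincr_ge phi : sincr phi -> forall n, (n <= phi n)%nat.
Proof. intros H n; induction n; [lia|]. specialize (H n); lia. Qed.
Lemma sincr_mono phi : sincr phi -> forall n m, (n <= m)%nat -> (phi n <= phi m)%nat.
Proof. intros H n m Hnm; induction Hnm; [lia|]. specialize (H m); lia. Qed.
Lemma sincr_comp phi psi : sincr phi -> sincr psi -> sincr (fun n => phi (psi n)).
Proof. intros H1 H2 n. pose proof (sincr_mono _ H1 (S (psi n)) (psi (S n)) (H2 n)).
  specialize (H1 (psi n)). lia. Qed.

Lemma inv_small eps : eps > 0 -> exists N : nat, / (INR N + 1) < eps.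
Proof.
  intro H. destruct (archimed (/ eps)) as [H1 _].
  assert (0 <= up (/eps))%Z. { apply le_IZR. pose proof (Rinv_0_lt_compat eps H). lra. }
  exists (Z.to_nat (up (/eps))). rewrite INR_IZR_INZ, Z2Nat.id by auto.
  pose proof (Rinv_0_lt_compat eps H).
  apply Rlt_le_trans with (r2 := / / eps); [apply Rinv_lt_contravar; nra | rewrite Rinv_inv; lra].
Qed.

Lemma Un_cv_le u l M : Un_cv u l -> (forall n, u n <= M) -> l <= M.
Proof.
  intros H HM. destruct (Rle_or_lt l M); auto.
  destruct (H (l - M)) as [N HN]; [lra|]. specialize (HN N (le_n _)). specialize (HM N).
  unfold Rdist in HN. apply Rabs_def2 in HN. lra.
Qed.
Lemma Un_cv_ge u l M : Un_cv u l -> (forall n, M <= u n) -> M <= l.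
Proof.
  intros H HM. destruct (Rle_or_lt M l); auto.
  destruct (H (M - l)) as [N HN]; [lra|]. specialize (HN N (le_n _)). specialize (HM N).
  unfold Rdist in HN. apply Rabs_def2 in HN. lra.
Qed.
Lemma Un_cv_le_ev u l M N0 : Un_cv u l -> (forall n, (N0 <= n)%nat -> u n <= M) -> l <= M.
Proof.
  intros H HM. destruct (Rle_or_lt l M); auto.
  destruct (H (l - M)) as [N HN]; [lra|]. specialize (HN (max N N0) ltac:(lia)).
  specialize (HM (max N N0) ltac:(lia)).
  unfold Rdist in HN. apply Rabs_def2 in HN. lra.
Qed.
Lemma Un_cv_ge_ev u l M N0 : Un_cv u l -> (forall n, (N0 <= n)%nat -> M <= u n) -> M <= l.
Proof.
  intros H HM. destruct (Rle_or_lt M l); auto.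
  destruct (H (M - l)) as [N HN]; [lra|]. specialize (HN (max N N0) ltac:(lia)).
  specialize (HM (max N N0) ltac:(lia)).
  unfold Rdist in HN. apply Rabs_def2 in HN. lra.
Qed.

Lemma Un_cv_subseq u l phi : Un_cv u l -> sincr phi -> Un_cv (fun n => u (phi n)) l.
Proof.
  intros H Hp eps He. destruct (H eps He) as [N HN]. exists N. intros n Hn.
  apply HN. pose proof (sincr_ge _ Hp n). lia.
Qed.
Lemma Un_cv_unique u l1 l2 : Un_cv u l1 -> Un_cv u l2 -> l1 = l2.
Proof. apply UL_sequence. Qed.

Lemma mono_cv u M : (forall n, u n <= u (S n)) -> (forall n, u n <= M) ->
  exists l, Un_cv u l.
Proof.
  intros H1 H2. destruct (growing_cv u H1) as [l Hl]. exists M. intros x [n ->]. apply H2.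
  eauto.
Qed.
Lemma mono_le u n m : (forall n, u n <= u (S n)) -> (n <= m)%nat -> u n <= u m.
Proof. intros H Hnm; induction Hnm; [lra|]. specialize (H m); lra. Qed.
Lemma mono_cv_le u l : (forall n, u n <= u (S n)) -> Un_cv u l -> forall n, u n <= l.
Proof. intros H Hl n. apply (Un_cv_ge_ev u l (u n) n Hl). intros; apply mono_le; auto. Qed.

Lemma summable_nonneg (s : nat -> R) M : (forall n, 0 <= s n) ->
  (forall n, sum_f_R0 s n <= M) -> summable s.
Proof.
  intros H0 HM. destruct (mono_cv (sum_f_R0 s) M) as [l Hl]; auto.
  intro n. simpl. specialize (H0 (S n)). lra. exists l. exact Hl.
Qed.

Lemma telescope_sum (a b : nat -> R) c : 0 < c -> (forall n, 0 <= a n) -> (forall n, 0 <= b n) ->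
  (forall n, c * a n <= b n - b (S n)) -> summable a.
Proof.
  intros Hc Ha Hb H. apply (summable_nonneg a (b 0%nat / c)); auto.
  assert (forall n, c * sum_f_R0 a n <= b 0%nat - b (S n)).
  { induction n; simpl. apply H. specialize (H (S n)). lra. }
  intro n. specialize (H0 n). specialize (Hb (S n)).
  apply (Rmult_le_reg_l c); auto. field_simplify; lra.
Qed.

Lemma BW (u : nat -> R) M : (forall n, Rabs (u n) <= M) ->
  exists phi l, sincr phi /\ Un_cv (fun n => u (phi n)) l.
Proof.
  intro HM. destruct (Bolzano_Weierstrass u (fun c => -M <= c <= M) (compact_P3 _ _)) as [l Hl].
  { intro n. specialize (HM n). split; [pose proof (Rle_abs (- u n)); rewrite Rabs_Ropp in *|pose proof (Rle_abs (u n))]; lra. }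
  assert (Hp : forall N k : nat, exists p, (N <= p)%nat /\ Rabs (u p - l) < / (INR k + 1)).
  { intros N k. assert (Hd : 0 < / (INR k + 1)).
    { apply Rinv_0_lt_compat. pose proof (pos_INR k); lra. }
    destruct (Hl (disc l (mkposreal _ Hd)) N) as [p [Hp1 Hp2]].
    - exists (mkposreal _ Hd). intros y Hy; exact Hy.
    - exists p. split; auto. }
  pose (pick := fun N k => proj1_sig (constructive_indefinite_description _ (Hp N k))).
  assert (Hpick : forall N k, (N <= pick N k)%nat /\ Rabs (u (pick N k) - l) < / (INR k + 1)).
  { intros N k. unfold pick. destruct (constructive_indefinite_description _ _). auto. }
  pose (phi := fix phi n := match n with O => pick O O | S m => pick (S (phi m)) (S m) end).
  exists phi, l. split.
  - intro n. simpl. destruct (Hpick (S (phi n)) (S n)). lia.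
  - assert (Hc : forall n, Rabs (u (phi n) - l) < / (INR n + 1)).
    { intros [|n]. apply Hpick. apply Hpick. }
    intros eps He. destruct (inv_small eps He) as [N HN]. exists N. intros n Hn.
    unfold Rdist. eapply Rlt_le_trans. apply Hc. eapply Rle_trans; [|left; exact HN].
    apply Rinv_le_contravar. pose proof (pos_INR N); lra. apply le_INR in Hn. lra.
Qed.
Lemma Rabs_le_inv a b : Rabs a <= b -> - b <= a <= b.
Proof. intro H. pose proof (Rle_abs a). pose proof (Rle_abs (-a)). rewrite Rabs_Ropp in H1. lra. Qed.

Section Proj.
Context {X : Hilbert}.
Implicit Types x y z w u v p q : X.

Lemma strong_cv_iff (u : nat -> X) l : strong_cv u l <->
  forall eps, eps > 0 -> exists N, forall n, (n >= N)%nat -> hnorm (hsub (u n) l) < eps.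
Proof.
  unfold strong_cv, Un_cv, Rdist. split; intros H eps He; destruct (H eps He) as [N HN];
  exists N; intros n Hn; specialize (HN n Hn).
  - rewrite Rminus_0_r, Rabs_pos_eq in HN by apply hnorm_pos. auto.
  - rewrite Rminus_0_r, Rabs_pos_eq by apply hnorm_pos. auto.
Qed.

Lemma complete_seq (u : nat -> X) :
  (forall eps, eps > 0 -> exists N, forall m n, (m >= N)%nat -> (n >= N)%nat ->
        hnorm (hsub (u m) (u n)) < eps) -> exists l, strong_cv u l.
Proof.
  intro H. destruct (hcomplete u H) as [l Hl]. exists l. apply strong_cv_iff. exact Hl.
Qed.

Lemma proj_var C x p q : hconvex_set C -> is_proj C x p -> C q ->
  hinner (hsub q p) (hsub x p) <= 0.
Proof.
  intros Hv [Hp Hmin] Hq.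
  destruct (Rle_or_lt (hinner (hsub q p) (hsub x p)) 0) as [|Ha]; auto. exfalso.
  set (a := hinner (hsub q p) (hsub x p)) in *.
  set (b := hinner (hsub q p) (hsub q p)).
  assert (Hb : 0 < b).
  { destruct (hinner_pos (hsub q p)) as [|E]; auto. symmetry in E; apply hinner_def in E.
    unfold a in Ha; rewrite E, ip_zero_l in Ha. lra. }
  set (t := Rmin 1 (a / b)).
  assert (Ht : 0 < t <= 1).
  { unfold t. split. apply Rmin_glb_lt. lra. apply Rdiv_lt_0_compat; lra. apply Rmin_l. }
  assert (Htb : t * b <= a).
  { assert (t <= a / b) by apply Rmin_r. apply (Rmult_le_compat_r b) in H; [|lra].
    unfold Rdiv in H. rewrite Rmult_assoc, Rinv_l in H by lra. lra. }
  specialize (Hmin _ (Hv p q t Hp Hq (conj (Rlt_le _ _ (proj1 Ht)) (proj2 Ht)))).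
  apply hnorm_le_inv in Hmin.
  assert (E : hinner (hsub x (hadd (hscal (1 - t) p) (hscal t q))) (hsub x (hadd (hscal (1 - t) p) (hscal t q)))
     = hinner (hsub x p) (hsub x p) - 2 * t * a + t * t * b).
  { unfold a, b. ip_simpl. rewrite (hinner_sym q x), (hinner_sym p x), (hinner_sym p q). ring. }
  rewrite E in Hmin. nra.
Qed.

Lemma var_proj C x p : C p -> (forall q, C q -> hinner (hsub q p) (hsub x p) <= 0) ->
  is_proj C x p.
Proof.
  intros Hp H. split; auto. intros q Hq. apply hnorm_le. specialize (H q Hq).
  assert (E : hinner (hsub x q) (hsub x q) = hinner (hsub x p) (hsub x p)
     + hinner (hsub q p) (hsub q p) - 2 * hinner (hsub q p) (hsub x p)).
  { ip_simpl. rewrite (hinner_sym q x), (hinner_sym p x), (hinner_sym p q). ring. }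
  rewrite E. pose proof (hinner_pos (hsub q p)). lra.
Qed.

Lemma proj_unique C x p1 p2 : hconvex_set C -> is_proj C x p1 -> is_proj C x p2 -> p1 = p2.
Proof.
  intros Hv H1 H2. pose proof (proj_var _ _ _ _ Hv H1 (proj1 H2)).
  pose proof (proj_var _ _ _ _ Hv H2 (proj1 H1)).
  assert (hinner (hsub p1 p2) (hsub p1 p2) = 0).
  { pose proof (hinner_pos (hsub p1 p2)) as H5. ip_simpl_in H5. ip_simpl_in H. ip_simpl_in H0. ip_simpl.
    rewrite (hinner_sym p2 x), (hinner_sym p1 x), (hinner_sym p2 p1) in *. lra. }
  apply hinner_def in H3. apply vec_ext. intro w.
  assert (hinner (hsub p1 p2) w = 0) by (rewrite H3; apply ip_zero_l).
  ip_simpl_in H4. lra.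
Qed.

Lemma proj_exists C x : hclosed_set C -> hconvex_set C -> (exists c, C c) ->
  exists p, is_proj C x p.
Proof.
  intros Hc Hv [c0 Hc0].
  set (E := fun r => exists c, C c /\ r = - hinner (hsub x c) (hsub x c)).
  assert (HE : bound E).
  { exists 0. intros r [c [_ ->]]. pose proof (hinner_pos (hsub x c)). lra. }
  destruct (completeness E HE (ex_intro _ _ (ex_intro _ c0 (conj Hc0 eq_refl)))) as [m [Hm1 Hm2]].
  set (d := - m).
  assert (Hd : forall c, C c -> d <= hinner (hsub x c) (hsub x c)).
  { intros c Hcc. assert (E (- hinner (hsub x c) (hsub x c))) by (exists c; auto).
    apply Hm1 in H. unfold d. lra. }
  assert (Hex : forall n : nat, exists c, C c /\ hinner (hsub x c) (hsub x c) < d + / (INR n + 1)).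
  { intro n. apply NNPP. intro Hn.
    assert (Hpos : 0 < / (INR n + 1)). { apply Rinv_0_lt_compat. pose proof (pos_INR n); lra. }
    assert (is_upper_bound E (m - / (INR n + 1))).
    { intros r [c [Hcc ->]]. destruct (Rle_or_lt (- hinner (hsub x c) (hsub x c)) (m - / (INR n + 1))); auto.
      exfalso. apply Hn. exists c. split; auto. unfold d. lra. }
    apply Hm2 in H. lra. }
  pose (cs := fun n => proj1_sig (constructive_indefinite_description _ (Hex n))).
  assert (Hcs : forall n, C (cs n) /\ hinner (hsub x (cs n)) (hsub x (cs n)) < d + / (INR n + 1)).
  { intro n. unfold cs. destruct (constructive_indefinite_description _ _). auto. }
  assert (Hd0 : 0 <= d). { pose proof (Hd c0 Hc0). specialize (Hm1 _ (ex_intro _ c0 (conj Hc0 eq_refl))).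
     unfold d. pose proof (hinner_pos (hsub x c0)). apply Ropp_le_cancel. rewrite Ropp_involutive.
     apply Hm2. intros r [c [_ ->]]. pose proof (hinner_pos (hsub x c)). lra. }
  (* parallelogram *)
  assert (Hpar : forall n k, hinner (hsub (cs n) (cs k)) (hsub (cs n) (cs k)) <= 2 * / (INR n + 1) + 2 * / (INR k + 1)).
  { intros n k. destruct (Hcs n) as [Cn Dn]. destruct (Hcs k) as [Ck Dk].
    assert (Cm : C (hadd (hscal (1 - /2) (cs n)) (hscal (/2) (cs k)))) by (apply Hv; auto; lra).
    apply Hd in Cm.
    assert (Eq : hinner (hsub (cs n) (cs k)) (hsub (cs n) (cs k)) =
      2 * hinner (hsub x (cs n)) (hsub x (cs n)) + 2 * hinner (hsub x (cs k)) (hsub x (cs k))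
      - 4 * hinner (hsub x (hadd (hscal (1 - /2) (cs n)) (hscal (/2) (cs k))))
                   (hsub x (hadd (hscal (1 - /2) (cs n)) (hscal (/2) (cs k))))).
    { ip_simpl. rewrite (hinner_sym (cs k) (cs n)), (hinner_sym (cs n) x), (hinner_sym (cs k) x). field. }
    rewrite Eq. lra. }
  destruct (complete_seq cs) as [p Hp].
  { intros eps He. destruct (inv_small (eps * eps / 4)) as [N HN]. apply Rdiv_lt_0_compat; nra.
    exists N. intros m0 n0 Hm Hn. apply hnorm_lt_c. lra. eapply Rle_lt_trans. apply Hpar.
    assert (forall k, (k >= N)%nat -> / (INR k + 1) <= / (INR N + 1)).
    { intros k Hk. apply Rinv_le_contravar. pose proof (pos_INR N); lra. apply le_INR in Hk; lra. }
    pose proof (H m0 Hm). pose proof (H n0 Hn). lra. }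
  assert (HpC : C p) by (apply (Hc cs p); auto; intro n; apply Hcs).
  exists p. split; auto. intros q Hq.
  destruct (Rle_or_lt (hnorm (hsub x p)) (hnorm (hsub x q))) as [|Hlt]; auto. exfalso.
  set (s := hnorm (hsub x q)) in *. set (g := hnorm (hsub x p) - s).
  assert (Hs : d <= s * s) by (unfold s; rewrite hnorm_sq; auto).
  assert (Hs0 : 0 <= s) by apply hnorm_pos.
  assert (Hg : 0 < g) by (unfold g; lra).
  rewrite strong_cv_iff in Hp. destruct (Hp (g / 2)) as [N1 HN1]; [lra|].
  destruct (inv_small (g * g / 4)) as [N2 HN2]; [apply Rdiv_lt_0_compat; nra|].
  set (n := max N1 N2).
  assert (H1 : hnorm (hsub (cs n) p) < g / 2) by (apply HN1; unfold n; lia).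
  assert (H2 : hnorm (hsub x (cs n)) < s + g / 2).
  { apply hnorm_lt_c. lra. destruct (Hcs n) as [_ Hn].
    assert (/ (INR n + 1) <= / (INR N2 + 1)).
    { apply Rinv_le_contravar. pose proof (pos_INR N2); lra. assert (INR N2 <= INR n) by (apply le_INR; unfold n; lia); lra. }
    nra. }
  pose proof (hnorm_sub_tri x (cs n) p). unfold g in *. lra.
Qed.
End Proj.

Lemma sincr_strict phi : sincr phi -> forall n m, (n < m)%nat -> (phi n < phi m)%nat.
Proof. intros H n m Hnm. pose proof (sincr_mono _ H (S n) m Hnm). specialize (H n). lia. Qed.

Lemma diagonal (a : nat -> nat -> R) B : (forall k n, Rabs (a k n) <= B) ->
  exists phi, sincr phi /\ forall k, exists l, Un_cv (fun n => a k (phi n)) l.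
Proof.
  intro HB.
  assert (Hext : forall (psi : nat -> nat) (k : nat), exists sg, sincr sg /\
     exists l, Un_cv (fun n => a k (psi (sg n))) l).
  { intros psi k. destruct (BW (fun n => a k (psi n)) B) as [sg [l [H1 H2]]]; eauto. }
  pose (ext := fun psi k => proj1_sig (constructive_indefinite_description _ (Hext psi k))).
  assert (Hx : forall psi k, sincr (ext psi k) /\ exists l, Un_cv (fun n => a k (psi (ext psi k n))) l).
  { intros psi k. unfold ext. destruct (constructive_indefinite_description _ _). auto. }
  pose (Psi := fix Psi k := match k with
     | O => fun n => ext (fun i => i) O n
     | S k' => fun n => Psi k' (ext (Psi k') (S k') n) end).
  assert (HPs : forall k, sincr (Psi k)).
  { induction k; simpl. apply (Hx (fun i => i) O).
    apply sincr_comp; auto. apply Hx. }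
  assert (HPc : forall k, exists l, Un_cv (fun n => a k (Psi k n)) l).
  { intros [|k]; simpl. apply (Hx (fun i => i) O). apply Hx. }
  assert (HPg : forall m n, (m <= n)%nat -> exists g, (forall i, (i <= g i)%nat) /\
      forall i, Psi n i = Psi m (g i)).
  { intros m n Hmn. induction Hmn.
    - exists (fun i => i). split; auto.
    - destruct IHHmn as [g [Hg1 Hg2]]. exists (fun i => g (ext (Psi m0) (S m0) i)). split.
      + intro i. specialize (Hg1 (ext (Psi m0) (S m0) i)).
        pose proof (sincr_ge _ (proj1 (Hx (Psi m0) (S m0))) i). lia.
      + intro i. simpl. apply Hg2. }
  exists (fun n => Psi n n). split.
  - intro n. simpl. apply sincr_strict; auto.
    pose proof (sincr_ge _ (proj1 (Hx (Psi n) (S n))) (S n)). lia.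
  - intro k. destruct (HPc k) as [l Hl]. exists l. intros eps He.
    destruct (Hl eps He) as [N HN]. exists (max N k). intros n Hn.
    destruct (HPg k n ltac:(lia)) as [g [Hg1 Hg2]]. rewrite Hg2. apply HN.
    specialize (Hg1 n). lia.
Qed.

Lemma Un_cv_ext (u v : nat -> R) l : (forall n, u n = v n) -> Un_cv u l -> Un_cv v l.
Proof. intros H Hu eps He. destruct (Hu eps He) as [N HN]. exists N. intros n Hn. rewrite <- H. auto. Qed.
Lemma Un_cv_const c : Un_cv (fun _ => c) c.
Proof. intros eps He. exists O. intros. unfold Rdist. rewrite Rminus_diag, Rabs_R0. auto. Qed.

Section Weak.
Context {X : Hilbert}.
Implicit Types x y z w u v p q : X.

Definition subspace (S : X -> Prop) := S hzero /\ (forall a b, S a -> S b -> S (hadd a b)) /\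
  (forall t a, S a -> S (hscal t a)).

Lemma subspace_convex S : subspace S -> hconvex_set S.
Proof. intros [H0 [H1 H2]] a b t Ha Hb _. auto. Qed.

Lemma subspace_orth S v p : subspace S -> is_proj S v p -> forall k, S k -> hinner k (hsub v p) = 0.
Proof.
  intros HS Hp k Hk. destruct HS as [H0 [H1 H2]] eqn:HSe.
  pose proof (proj_var S v p (hadd p k) (subspace_convex S HS) Hp (H1 _ _ (proj1 Hp) Hk)) as A1.
  pose proof (proj_var S v p (hadd p (hscal (-1) k)) (subspace_convex S HS) Hp
     (H1 _ _ (proj1 Hp) (H2 (-1) _ Hk))) as A2.
  ip_simpl_in A1. ip_simpl_in A2. ip_simpl. lra.
Qed.

Lemma riesz (u : nat -> X) M f : (forall n, hnorm (u n) <= M) ->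
  (forall w, Un_cv (fun n => hinner (u n) w) (f w)) -> exists y, forall w, f w = hinner y w.
Proof.
  intros HM Hf.
  assert (M0 : 0 <= M) by (pose proof (hnorm_pos (u O)); specialize (HM O); lra).
  assert (fadd : forall a b, f (hadd a b) = f a + f b).
  { intros a b. apply (Un_cv_unique (fun n => hinner (u n) (hadd a b))); auto.
    apply (Un_cv_ext (fun n => hinner (u n) a + hinner (u n) b)). intro; ip_simpl; auto.
    apply CV_plus; auto. }
  assert (fscal : forall t a, f (hscal t a) = t * f a).
  { intros t a. apply (Un_cv_unique (fun n => hinner (u n) (hscal t a))); auto.
    apply (Un_cv_ext (fun n => t * hinner (u n) a)). intro; ip_simpl; auto.
    apply CV_mult; auto. apply Un_cv_const. }
  assert (fopp : forall a, f (hopp a) = - f a).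
  { intros a. apply (Un_cv_unique (fun n => hinner (u n) (hopp a))); auto.
    apply (Un_cv_ext (fun n => -1 * hinner (u n) a)). intro; ip_simpl; ring.
    replace (- f a) with (-1 * f a) by ring. apply CV_mult; auto. apply Un_cv_const. }
  assert (fzero : f hzero = 0).
  { apply (Un_cv_unique (fun n => hinner (u n) hzero)); auto.
    apply (Un_cv_ext (fun n => 0)). intro; ip_simpl; auto. apply Un_cv_const. }
  assert (fbd : forall w, Rabs (f w) <= M * hnorm w).
  { intro w. apply Rabs_le. pose proof (hnorm_pos w).
    assert (Hb : forall n, Rabs (hinner (u n) w) <= M * hnorm w).
    { intro n. eapply Rle_trans. apply CS. apply Rmult_le_compat_r; auto. }
    split.
    - apply (Un_cv_ge _ _ _ (Hf w)). intro n. specialize (Hb n). apply Rabs_le_inv in Hb. lra.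
    - apply (Un_cv_le _ _ _ (Hf w)). intro n. specialize (Hb n). apply Rabs_le_inv in Hb. lra. }
  set (K := fun w => f w = 0).
  assert (KS : subspace K).
  { unfold K; split; [|split]; intros. auto. rewrite fadd, H, H0; ring. rewrite fscal, H; ring. }
  assert (Kc : hclosed_set K).
  { intros s l Hs Hl. unfold K in *. pose proof (proj1 (strong_cv_iff _ _) Hl) as Hl0; clear Hl; rename Hl0 into Hl.
    destruct (Req_dec (f l) 0) as [|Hne]; auto. exfalso.
    assert (Hpos : 0 < Rabs (f l)) by (apply Rabs_pos_lt; auto).
    destruct (Hl (Rabs (f l) / (M + 1))) as [N HN]. apply Rdiv_lt_0_compat; lra.
    specialize (HN N (le_n _)).
    pose proof (fbd (hsub (s N) l)). unfold hsub in H. rewrite fadd, fopp, (Hs N) in H.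
    rewrite Rplus_0_l, Rabs_Ropp in H. fold (hsub (s N) l) in H.
    pose proof (hnorm_pos (hsub (s N) l)).
    assert (M * hnorm (hsub (s N) l) <= M * (Rabs (f l) / (M + 1))) by (apply Rmult_le_compat_l; lra).
    assert (Rabs (f l) / (M + 1) * (M+1) = Rabs (f l)) by (field; lra).
    nra. }
  destruct (classic (exists v0, f v0 <> 0)) as [[v0 Hv0]|Hall].
  2:{ exists hzero. intro w. rewrite ip_zero_l. apply NNPP. intro; apply Hall; eauto. }
  destruct (proj_exists K v0 Kc (subspace_convex K KS) (ex_intro _ hzero fzero)) as [p Hp].
  set (e := hsub v0 p).
  assert (Hfe : f e = f v0). { unfold e, hsub. rewrite fadd, fopp. rewrite (proj1 Hp). ring. }
  assert (Horth := subspace_orth K v0 p KS Hp). fold e in Horth.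
  assert (Hc : hinner e e <> 0).
  { intro E0. apply hinner_def in E0. rewrite E0, fzero in Hfe. auto. }
  exists (hscal (f e / hinner e e) e). intro w.
  assert (Kw : K (hsub w (hscal (f w / f e) e))).
  { unfold K, hsub. rewrite fadd, fopp, fscal. field. rewrite Hfe; auto. }
  apply Horth in Kw. ip_simpl_in Kw. ip_simpl. rewrite (hinner_sym e w).
  assert (hinner w e = f w / f e * hinner e e) by lra. rewrite H. field. rewrite Hfe; auto.
Qed.

Lemma weak_compact (x : nat -> X) M : (forall n, hnorm (x n) <= M) -> exists y, weak_cluster_point x y.
Proof.
  intro HM.
  assert (M0 : 0 <= M) by (pose proof (hnorm_pos (x O)); specialize (HM O); lra).
  destruct (diagonal (fun k n => hinner (x n) (x k)) (M * M)) as [phi [Hphi Hcv]].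
  { intros k n. eapply Rle_trans. apply CS. pose proof (hnorm_pos (x n)).
    pose proof (hnorm_pos (x k)). pose proof (HM n); pose proof (HM k). nra. }
  set (u := fun n => x (phi n)).
  assert (HMu : forall n, hnorm (u n) <= M) by (intro; apply HM).
  set (W := fun w => exists l, Un_cv (fun n => hinner (u n) w) l).
  assert (WS : subspace W).
  { split; [|split].
    - exists 0. apply (Un_cv_ext (fun n => 0)). intro; ip_simpl; auto. apply Un_cv_const.
    - intros a b [la Ha] [lb Hb]. exists (la + lb).
      apply (Un_cv_ext (fun n => hinner (u n) a + hinner (u n) b)). intro; ip_simpl; auto.
      apply CV_plus; auto.
    - intros t a [la Ha]. exists (t * la).
      apply (Un_cv_ext (fun n => t * hinner (u n) a)). intro; ip_simpl; auto.
      apply CV_mult; auto. apply Un_cv_const. }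
  assert (Wc : hclosed_set W).
  { intros s l Hs Hl. pose proof (proj1 (strong_cv_iff _ _) Hl) as Hl0; clear Hl; rename Hl0 into Hl.
    assert (Cauchy_crit (fun n => hinner (u n) l)).
    { intros eps He. destruct (Hl (eps / (4 * (M + 1)))) as [j Hj].
      apply Rdiv_lt_0_compat; lra. specialize (Hj j (le_n _)).
      destruct (Hs j) as [lj Hlj].
      destruct (CV_Cauchy _ (exist _ lj Hlj) (eps / 2)) as [N HN]; [lra|].
      exists N. intros n m Hn Hm. specialize (HN n m Hn Hm). unfold Rdist in *.
      assert (E1 : hinner (u n) l - hinner (u m) l =
        (hinner (u n) (s j) - hinner (u m) (s j)) - hinner (u n) (hsub (s j) l) + hinner (u m) (hsub (s j) l)).
      { ip_simpl. ring. }
      rewrite E1. pose proof (CS (u n) (hsub (s j) l)). pose proof (CS (u m) (hsub (s j) l)).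
      pose proof (hnorm_pos (hsub (s j) l)).
      assert (hnorm (u n) * hnorm (hsub (s j) l) <= M * (eps / (4 * (M + 1)))).
      { apply Rmult_le_compat; auto using hnorm_pos; lra. }
      assert (hnorm (u m) * hnorm (hsub (s j) l) <= M * (eps / (4 * (M + 1)))).
      { apply Rmult_le_compat; auto using hnorm_pos; lra. }
      assert (M * (eps / (4 * (M + 1))) <= eps / 4).
      { apply (Rmult_le_reg_r (4 * (M+1))). lra. field_simplify; nra. }
      eapply Rle_lt_trans. apply Rabs_triang. eapply Rle_lt_trans.
      apply Rplus_le_compat_r. apply Rabs_triang.
      rewrite Rabs_Ropp. lra. }
    destruct (R_complete _ H) as [ll Hll]. exists ll. exact Hll. }
  assert (Wx : forall k, W (x k)) by (intro k; apply Hcv).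
  set (V := fun w => forall S, subspace S -> hclosed_set S -> (forall k, S (x k)) -> S w).
  assert (VW : forall w, V w -> W w) by (intros w Hw; apply Hw; auto).
  assert (VS : subspace V).
  { split; [|split]; intros; intros S HS HSc HSx.
    apply HS. apply HS; [apply H|apply H0]; auto. apply HS; apply H; auto. }
  assert (Vc : hclosed_set V).
  { intros s l Hs Hl S HS HSc HSx. apply (HSc s l); auto. intro n; apply Hs; auto. }
  assert (Vu : forall n, V (u n)) by (intros n S _ _ HSx; apply HSx).
  assert (Hlim : forall w, exists l, Un_cv (fun n => hinner (u n) w) l).
  { intro w. destruct (proj_exists V w Vc (subspace_convex V VS) (ex_intro _ hzero (proj1 VS))) as [p Hp].
    destruct (VW p (proj1 Hp)) as [l Hl]. exists l.
    apply (Un_cv_ext (fun n => hinner (u n) p)); auto. intro n.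
    pose proof (subspace_orth V w p VS Hp (u n) (Vu n)). ip_simpl_in H. lra. }
  set (f := fun w => proj1_sig (constructive_indefinite_description _ (Hlim w))).
  assert (Hf : forall w, Un_cv (fun n => hinner (u n) w) (f w)).
  { intro w. unfold f. destruct (constructive_indefinite_description _ _). auto. }
  destruct (riesz u M f HMu Hf) as [y Hy]. exists y, phi. split; auto.
  intro w. rewrite <- Hy. apply Hf.
Qed.
End Weak.

Lemma extract_sub (P : nat -> Prop) : (forall N, exists n, (N <= n)%nat /\ P n) ->
  exists psi, sincr psi /\ forall n, P (psi n).
Proof.
  intro H.
  pose (pick := fun N => proj1_sig (constructive_indefinite_description _ (H N))).
  assert (Hp : forall N, (N <= pick N)%nat /\ P (pick N)).
  { intro N. unfold pick. destruct (constructive_indefinite_description _ _). auto. }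
  pose (psi := fix psi n := match n with O => pick O | S m => pick (S (psi m)) end).
  exists psi. split.
  - intro n. simpl. destruct (Hp (S (psi n))). lia.
  - intros [|n]; apply Hp.
Qed.

Section Opial.
Context {X : Hilbert}.
Implicit Types x y z w u v p q : X.

Lemma wcp_sub (x : nat -> X) psi y : sincr psi -> weak_cluster_point (fun n => x (psi n)) y ->
  weak_cluster_point x y.
Proof. intros Hp [phi [H1 H2]]. exists (fun n => psi (phi n)). split; auto. apply sincr_comp; auto. Qed.

Lemma opial (x : nat -> X) (F : X -> Prop) M : (forall n, hnorm (x n) <= M) ->
  (forall y, F y -> exists L, Un_cv (fun n => hinner (hsub (x n) y) (hsub (x n) y)) L) ->
  (forall y, weak_cluster_point x y -> F y) -> exists p, F p /\ weak_cv x p.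
Proof.
  intros HM HL Hw.
  assert (Huniq : forall y0 y1, weak_cluster_point x y0 -> weak_cluster_point x y1 -> y0 = y1).
  { intros y0 y1 H0 H1.
    destruct (HL y0 (Hw _ H0)) as [L0 HL0]. destruct (HL y1 (Hw _ H1)) as [L1 HL1].
    assert (Hc : Un_cv (fun n => hinner (x n) (hsub y1 y0))
         ((L0 - L1 - hinner y0 y0 + hinner y1 y1) / 2)).
    { apply (Un_cv_ext (fun n => (hinner (hsub (x n) y0) (hsub (x n) y0) - hinner (hsub (x n) y1) (hsub (x n) y1)
          - hinner y0 y0 + hinner y1 y1) / 2)).
      intro n. ip_simpl. rewrite (hinner_sym y0 (x n)), (hinner_sym y1 (x n)). field.
      unfold Rdiv. apply CV_mult; [|apply Un_cv_const].
      apply CV_plus. apply CV_minus. apply CV_minus; auto. apply Un_cv_const. apply Un_cv_const. }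
    destruct H0 as [phi0 [Hp0 Hw0]]. destruct H1 as [phi1 [Hp1 Hw1]].
    pose proof (Un_cv_unique _ _ _ (Hw0 (hsub y1 y0)) (Un_cv_subseq _ _ _ Hc Hp0)) as E0.
    pose proof (Un_cv_unique _ _ _ (Hw1 (hsub y1 y0)) (Un_cv_subseq _ _ _ Hc Hp1)) as E1.
    assert (hinner (hsub y1 y0) (hsub y1 y0) = 0).
    { replace (hinner (hsub y1 y0) (hsub y1 y0)) with (hinner y1 (hsub y1 y0) - hinner y0 (hsub y1 y0))
        by (ip_simpl; ring). lra. }
    apply hinner_def in H. apply vec_ext. intro w'.
    assert (hinner (hsub y1 y0) w' = 0) by (rewrite H; apply ip_zero_l). ip_simpl_in H0. lra. }
  destruct (weak_compact x M HM) as [y0 Hy0]. exists y0. split; auto.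
  intro w. apply NNPP. intro Hn.
  assert (Hd : exists d, d > 0 /\ forall N, exists n, (N <= n)%nat /\
     d <= Rabs (hinner (x n) w - hinner y0 w)).
  { apply NNPP. intro Hno. apply Hn. intros eps He. apply NNPP. intro Hne.
    apply Hno. exists eps. split; auto. intro N. apply NNPP. intro Hnn. apply Hne.
    exists N. intros n Hnn'. unfold Rdist. apply Rnot_le_lt. intro Hle. apply Hnn. exists n; auto. }
  destruct Hd as [d [Hd HdN]].
  destruct (extract_sub _ HdN) as [psi [Hpsi Hpsi2]].
  destruct (weak_compact (fun n => x (psi n)) M) as [y1 Hy1]. intro; apply HM.
  assert (Hy1' : weak_cluster_point x y1) by (eapply wcp_sub; eauto).
  pose proof (Huniq _ _ Hy0 Hy1'). subst y1.
  destruct Hy1 as [phi [Hphi Hwc]]. specialize (Hwc w).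
  destruct (Hwc d Hd) as [N HN]. specialize (HN N (le_n _)). specialize (Hpsi2 (phi N)).
  unfold Rdist in HN. lra.
Qed.
End Opial.

Lemma anti_cv (u : nat -> R) : (forall n, u (S n) <= u n) -> (forall n, 0 <= u n) ->
  exists l, Un_cv u l.
Proof.
  intros H1 H2. destruct (decreasing_cv u) as [l Hl]. intro n; apply H1.
  exists 0. intros r [i ->]. unfold opp_seq. specialize (H2 i). lra. eauto.
Qed.
Lemma anti_le (u : nat -> R) n m : (forall n, u (S n) <= u n) -> (n <= m)%nat -> u m <= u n.
Proof. intros H Hnm; induction Hnm; [lra|]. specialize (H m); lra. Qed.

Section P1.
Context {X : Hilbert}.

Lemma part1 (F : X -> Prop) (T : nat -> X -> X) (HT : coherent F T) :
  (exists z, F z) ->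
    forall (eps : R) (x0 : X), 0 < eps <= 1 ->
    forall x : nat -> X, x 0%nat = x0 ->
      (forall n, x (S n) = hadd (x n) (hscal (2 - eps) (hsub (T n (x n)) (x n)))) ->
      exists p, F p /\ weak_cv x p.
Proof.
  intros [z0 Hz0] eps x0 Heps x Hx0 Hrec.
  set (lam := 2 - eps).
  assert (Fej : forall z, F z -> forall n,
    hinner (hsub (x (S n)) z) (hsub (x (S n)) z) + lam * eps * hinner (hsub (x n) (T n (x n))) (hsub (x n) (T n (x n)))
     <= hinner (hsub (x n) z) (hsub (x n) z)).
  { intros z Hz n. pose proof (proj1 HT n (x n) z Hz) as Hh. unfold Hs in Hh.
    rewrite Hrec. fold lam. set (a := x n) in *. set (t := T n a) in *.
    set (h := hinner (hsub z t) (hsub a t)) in *.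
    assert (E : hinner (hsub (hadd a (hscal lam (hsub t a))) z) (hsub (hadd a (hscal lam (hsub t a))) z)
       + lam * eps * hinner (hsub a t) (hsub a t) = hinner (hsub a z) (hsub a z) + 2 * lam * h).
    { unfold h, lam. ip_simpl. rewrite ?(hinner_sym t a), ?(hinner_sym z a), ?(hinner_sym z t). ring. }
    rewrite E. assert (lam * h <= 0). { unfold lam. nra. } lra. }
  assert (Hlam : 1 <= lam) by (unfold lam; lra).
  assert (Mono : forall z, F z -> forall n,
     hinner (hsub (x (S n)) z) (hsub (x (S n)) z) <= hinner (hsub (x n) z) (hsub (x n) z)).
  { intros z Hz n. pose proof (Fej z Hz n). pose proof (hinner_pos (hsub (x n) (T n (x n)))).
    assert (0 <= lam * eps * hinner (hsub (x n) (T n (x n))) (hsub (x n) (T n (x n)))).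
    { apply Rmult_le_pos; auto. apply Rmult_le_pos; lra. } lra. }
  set (M := hnorm (hsub x0 z0) + hnorm z0).
  assert (HM : forall n, hnorm (x n) <= M).
  { intro n. replace (x n) with (hadd (hsub (x n) z0) z0) by vext.
    eapply Rle_trans. apply hnorm_tri. apply Rplus_le_compat_r.
    apply hnorm_le. rewrite <- Hx0.
    apply (anti_le (fun n => hinner (hsub (x n) z0) (hsub (x n) z0))). apply Mono; auto. lia. }
  apply (opial x F M HM).
  - intros y Hy. apply anti_cv. apply Mono; auto. intro; apply hinner_pos.
  - apply (proj2 HT).
    + exists M. auto.
    + apply (telescope_sum _ (fun n => hinner (hsub (x n) z0) (hsub (x n) z0)) (eps / lam)).
      apply Rdiv_lt_0_compat; lra. intro; apply pow2_ge_0. intro; apply hinner_pos.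
      intro n. rewrite hnorm_sq2. pose proof (Fej z0 Hz0 n).
      replace (eps / lam * hinner (hsub (x (S n)) (x n)) (hsub (x (S n)) (x n)))
        with (lam * eps * hinner (hsub (x n) (T n (x n))) (hsub (x n) (T n (x n)))). lra.
      rewrite Hrec. fold lam. ip_simpl. rewrite ?(hinner_sym (T n (x n)) (x n)). field. lra.
    + apply (telescope_sum _ (fun n => hinner (hsub (x n) z0) (hsub (x n) z0)) (lam * eps)).
      apply Rmult_lt_0_compat; lra. intro; apply pow2_ge_0. intro; apply hinner_pos.
      intro n. rewrite hnorm_sq2. pose proof (Fej z0 Hz0 n). lra.
Qed.
End P1.

Section P2.
Context {X : Hilbert}.
Implicit Types a b c d x y z w u v p q : X.

Lemma Hs_closed a b : hclosed_set (Hs a b).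
Proof.
  intros s l Hs0 Hl. pose proof (proj1 (strong_cv_iff _ _) Hl) as Hl'. unfold Hs in *.
  destruct (Rle_or_lt (hinner (hsub l b) (hsub a b)) 0) as [|Hg]; auto. exfalso.
  set (g := hinner (hsub l b) (hsub a b)) in *.
  destruct (Hl' (g / (hnorm (hsub a b) + 1))) as [N HN].
  { apply Rdiv_lt_0_compat; auto. pose proof (hnorm_pos (hsub a b)); lra. }
  specialize (HN N (le_n _)). specialize (Hs0 N).
  pose proof (CS2 (hsub (s N) l) (hsub a b)).
  assert (E : hinner (hsub (s N) l) (hsub a b) = hinner (hsub (s N) b) (hsub a b) - g)
    by (unfold g; ip_simpl; ring).
  pose proof (hnorm_pos (hsub a b)). pose proof (hnorm_pos (hsub (s N) l)).
  assert (hnorm (hsub (s N) l) * hnorm (hsub a b) <= g / (hnorm (hsub a b) + 1) * hnorm (hsub a b)).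
  { apply Rmult_le_compat_r; lra. }
  assert (g / (hnorm (hsub a b) + 1) * hnorm (hsub a b) < g).
  { apply (Rmult_lt_reg_r (hnorm (hsub a b) + 1)). lra. field_simplify; lra. }
  lra.
Qed.

Lemma Hs_convex a b : hconvex_set (Hs a b).
Proof.
  intros u v t Hu Hv Ht. unfold Hs in *. ip_simpl_in Hu. ip_simpl_in Hv. ip_simpl.
  set (A := hinner u a + - hinner u b + - (hinner b a + - hinner b b)) in *.
  set (B := hinner v a + - hinner v b + - (hinner b a + - hinner b b)) in *.
  match goal with |- ?L <= 0 => replace L with ((1 - t) * A + t * B) by (unfold A, B; ring) end.
  nra.
Qed.

Lemma Cset_closed a b c d : hclosed_set (fun w => Hs a b w /\ Hs c d w).
Proof.
  intros s l Hs0 Hl. split. apply (Hs_closed a b s); auto. intro n; apply Hs0.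
  apply (Hs_closed c d s); auto. intro n; apply Hs0.
Qed.
Lemma Cset_convex a b c d : hconvex_set (fun w => Hs a b w /\ Hs c d w).
Proof. intros u v t [] [] Ht. split; apply Hs_convex; auto. Qed.

Lemma Hs_self a w : Hs a a w.
Proof. unfold Hs. rewrite hsub_self, ip_zero_r. lra. Qed.

End P2.

Lemma least_ex (P : nat -> Prop) : (exists m, P m) -> exists m, P m /\ forall k, (k < m)%nat -> ~ P k.
Proof.
  intros [m Hm]. apply NNPP. intro Hno.
  assert (forall n k, (k <= n)%nat -> ~ P k).
  { induction n; intros k Hk.
    - intro Pk. apply Hno. exists k. split; auto. intros; lia.
    - destruct (Nat.eq_dec k (S n)) as [->|]; [|apply IHn; lia].
      intro Pk. apply Hno. exists (S n). split; auto. intros k' Hk'. apply IHn. lia. }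
  apply (H m m); auto.
Qed.

Section J.
Context {X : Hilbert}.

Lemma run_exists (T : nat -> X -> X) (x0 : X) : exists x N, Q_run T x0 x N.
Proof.
  pose (next := fun n a => epsilon (inhabits x0) (fun p => is_Q x0 a (T n a) p)).
  pose (x := fix xs n := match n with O => x0 | S m => next m (xs m) end).
  assert (Hx : forall n, x (S n) = next n (x n)) by reflexivity.
  pose (empty := fun m => ~ exists w, Hs x0 (x m) w /\ Hs (x m) (T m (x m)) w).
  assert (Hstep : forall n, ~ empty n -> is_Q x0 (x n) (T n (x n)) (x (S n))).
  { intros n Hn. rewrite Hx. unfold next. apply epsilon_spec.
    apply proj_exists. apply Cset_closed. apply Cset_convex. apply NNPP; exact Hn. }
  destruct (classic (exists m, empty m)) as [He|He].
  - destruct (least_ex _ He) as [m0 [Hm0 Hmin]]. exists x, (Some m0).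
    split; [reflexivity|split].
    + intros n Hn. apply Hstep. apply Hmin. apply Hn. reflexivity.
    + intros m Hm. injection Hm as <-. exact Hm0.
  - exists x, None. split; [reflexivity|split].
    + intros n _. apply Hstep. intro. apply He; eauto.
    + intros m Hm; discriminate.
Qed.
End J.

Section K.
Context {X : Hilbert}.
Variables (F : X -> Prop) (T : nat -> X -> X).
Hypotheses (HFc : hclosed_set F) (HFv : hconvex_set F) (HT : coherent F T).

Lemma F_in_H x0 x N : Q_run T x0 x N -> forall n, (forall m, N = Some m -> (n <= m)%nat) ->
  forall z, F z -> Hs x0 (x n) z.
Proof.
  intros [H0 [Hq _]] n. induction n; intros Hn z Hz.
  - rewrite H0. apply Hs_self.
  - assert (Hn' : forall m, N = Some m -> (n <= m)%nat) by (intros m Hm; specialize (Hn m Hm); lia).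
    assert (Hs' : forall m, N = Some m -> (n < m)%nat) by (intros m Hm; specialize (Hn m Hm); lia).
    specialize (Hq n Hs'). unfold is_Q in Hq.
    apply (proj_var _ _ _ _ (Cset_convex _ _ _ _) Hq). split; auto. apply (proj1 HT); auto.
Qed.

Lemma run_mono x0 x : Q_run T x0 x None -> forall n,
  hinner (hsub (x n) x0) (hsub (x n) x0) <= hinner (hsub (x (S n)) x0) (hsub (x (S n)) x0).
Proof.
  intros [H0 [Hq _]] n.
  assert (Hq' : is_Q x0 (x n) (T n (x n)) (x (S n))) by (apply Hq; discriminate).
  destruct (proj1 Hq') as [A1 _]. unfold Hs in A1.
  assert (E : hinner (hsub (x (S n)) x0) (hsub (x (S n)) x0) = hinner (hsub (x n) x0) (hsub (x n) x0)
    + hinner (hsub (x (S n)) (x n)) (hsub (x (S n)) (x n)) - 2 * hinner (hsub (x (S n)) (x n)) (hsub x0 (x n))).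
  { ip_simpl. rewrite ?(hinner_sym x0 (x n)), ?(hinner_sym (x n) (x (S n))), ?(hinner_sym x0 (x (S n))). ring. }
  pose proof (hinner_pos (hsub (x (S n)) (x n))). lra.
Qed.

Lemma run_bounded x0 x B : Q_run T x0 x None ->
  (forall n, hinner (hsub (x n) x0) (hsub (x n) x0) <= B) ->
  (forall y, weak_cluster_point x y -> F y) /\ (exists y, weak_cluster_point x y) /\
  (forall n, hnorm (x n) <= sqrt B + hnorm x0).
Proof.
  intros [H0 [Hq _]] HB.
  assert (Hq' : forall n, is_Q x0 (x n) (T n (x n)) (x (S n))) by (intro n; apply Hq; discriminate).
  assert (L4 : forall n, hinner (hsub (x n) x0) (hsub (x n) x0) + hinner (hsub (x (S n)) (x n)) (hsub (x (S n)) (x n))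
     <= hinner (hsub (x (S n)) x0) (hsub (x (S n)) x0)).
  { intro n. destruct (proj1 (Hq' n)) as [A1 _]. unfold Hs in A1.
    assert (E : hinner (hsub (x (S n)) x0) (hsub (x (S n)) x0) = hinner (hsub (x n) x0) (hsub (x n) x0)
      + hinner (hsub (x (S n)) (x n)) (hsub (x (S n)) (x n)) - 2 * hinner (hsub (x (S n)) (x n)) (hsub x0 (x n))).
    { ip_simpl. rewrite ?(hinner_sym x0 (x n)), ?(hinner_sym (x n) (x (S n))), ?(hinner_sym x0 (x (S n))). ring. }
    lra. }
  assert (L5 : forall n, hinner (hsub (x n) (T n (x n))) (hsub (x n) (T n (x n)))
     <= hinner (hsub (x (S n)) (x n)) (hsub (x (S n)) (x n))).
  { intro n. destruct (proj1 (Hq' n)) as [_ A2]. unfold Hs in A2.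
    set (t := T n (x n)) in *.
    assert (E : hinner (hsub (x (S n)) t) (hsub (x n) t) =
      hinner (hsub (x (S n)) (x n)) (hsub (x n) t) + hinner (hsub (x n) t) (hsub (x n) t)) by (ip_simpl; ring).
    pose proof (CS2 (hsub (x (S n)) (x n)) (hsub (x n) t)).
    rewrite <- !hnorm_sq in *. set (s := hnorm (hsub (x n) t)) in *.
    set (D := hnorm (hsub (x (S n)) (x n))) in *.
    assert (0 <= s) by apply hnorm_pos. assert (0 <= D) by apply hnorm_pos.
    assert (s <= D). { destruct (Req_dec s 0). lra. apply (Rmult_le_reg_r s). lra. nra. }
    nra. }
  assert (B0 : 0 <= B) by (pose proof (HB O); pose proof (hinner_pos (hsub (x O) x0)); lra).
  assert (Hbd : forall n, hnorm (x n) <= sqrt B + hnorm x0).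
  { intro n. replace (x n) with (hadd (hsub (x n) x0) x0) by vext.
    eapply Rle_trans. apply hnorm_tri. apply Rplus_le_compat_r. apply hnorm_le_c.
    apply sqrt_pos. rewrite sqrt_sqrt; auto. }
  assert (Hw : forall y, weak_cluster_point x y -> F y).
  { apply (proj2 HT).
    - exists (sqrt B + hnorm x0). auto.
    - apply (telescope_sum _ (fun n => B - hinner (hsub (x n) x0) (hsub (x n) x0)) 1). lra.
      intro; apply pow2_ge_0. intro n. specialize (HB n). lra.
      intro n. rewrite hnorm_sq2. specialize (L4 n). lra.
    - apply (telescope_sum _ (fun n => B - hinner (hsub (x n) x0) (hsub (x n) x0)) 1). lra.
      intro; apply pow2_ge_0. intro n. specialize (HB n). lra.
      intro n. rewrite hnorm_sq2. specialize (L4 n). specialize (L5 n). lra. }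
  split; auto. split; auto. apply (weak_compact x _ Hbd).
Qed.
End K.

Section L.
Context {X : Hilbert}.
Variables (F : X -> Prop) (T : nat -> X -> X).
Hypotheses (HFc : hclosed_set F) (HFv : hconvex_set F) (HT : coherent F T).

Lemma nsq_sym (a b : X) : hinner (hsub a b) (hsub a b) = hinner (hsub b a) (hsub b a).
Proof. ip_simpl. ring. Qed.

Lemma run_cases x0 x N : Q_run T x0 x N ->
         ( (exists z, F z) /\ N = None /\
             exists p, is_proj F x0 p /\ strong_cv x p )
         \/ ( (~ exists z, F z) /\ N = None /\ cv_infty (fun n => hnorm (x n)) )
         \/ ( (~ exists z, F z) /\ N <> None ).
Proof.
  intro Hr. destruct (classic (exists z, F z)) as [HF|HF].
  - left. assert (HN : N = None).
    { destruct N as [m|]; auto. exfalso. destruct HF as [z Hz]. apply (proj2 (proj2 Hr) m eq_refl).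
      exists z. split. apply (F_in_H F T HT x0 x (Some m) Hr m); auto.
      intros m' Hm'; injection Hm' as <-; lia. apply (proj1 HT); auto. }
    subst N. split; auto. split; auto.
    destruct (proj_exists F x0 HFc HFv HF) as [p Hp]. exists p. split; auto.
    set (R2 := hinner (hsub p x0) (hsub p x0)).
    assert (Hbd : forall n, hinner (hsub (x n) x0) (hsub (x n) x0) <= R2).
    { intros [|n].
      - rewrite (proj1 Hr), hsub_self, ip_zero_l. apply hinner_pos.
      - assert (Hq : is_Q x0 (x n) (T n (x n)) (x (S n))) by (apply (proj2 Hr); discriminate).
        destruct Hq as [_ Hmin]. specialize (Hmin p). unfold R2.
        rewrite (nsq_sym (x (S n))), (nsq_sym p). apply hnorm_le_inv. apply Hmin.
        split. apply (F_in_H F T HT x0 x None Hr n); [discriminate|apply Hp].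
        apply (proj1 HT). apply Hp. }
    destruct (run_bounded F T HT x0 x R2 Hr Hbd) as [Hw [_ HM]].
    apply strong_cv_iff. intros eps0 Heps0. apply NNPP. intro Hno.
    assert (HdN : forall N, exists n, (N <= n)%nat /\ eps0 <= hnorm (hsub (x n) p)).
    { intro N0. apply NNPP. intro Hn. apply Hno. exists N0. intros n Hn0.
      apply Rnot_le_lt. intro. apply Hn. exists n. auto. }
    destruct (extract_sub _ HdN) as [psi [Hpsi Hpsi2]].
    destruct (weak_compact (fun n => x (psi n)) _ (fun n => HM (psi n))) as [y Hy].
    assert (Fy : F y) by (apply Hw; eapply wcp_sub; eauto).
    destruct Hy as [phi [Hphi Hwc]].
    set (v := fun j => x (psi (phi j))) in *.
    assert (Hv : forall j, hnorm (hsub (v j) x0) <= hnorm (hsub p x0)) by (intro j; apply hnorm_le; apply Hbd).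
    assert (Hyp : y = p).
    { assert (Hle : hinner y (hsub y x0) <= hnorm (hsub p x0) * hnorm (hsub y x0) + hinner x0 (hsub y x0)).
      { apply (Un_cv_le _ _ _ (Hwc (hsub y x0))). intro j. fold (v j).
        replace (hinner (v j) (hsub y x0)) with (hinner (hsub (v j) x0) (hsub y x0) + hinner x0 (hsub y x0))
          by (ip_simpl; ring).
        pose proof (CS1 (hsub (v j) x0) (hsub y x0)). pose proof (Hv j).
        pose proof (hnorm_pos (hsub y x0)).
        assert (hnorm (hsub (v j) x0) * hnorm (hsub y x0) <= hnorm (hsub p x0) * hnorm (hsub y x0))
          by (apply Rmult_le_compat_r; auto). lra. }
      assert (E : hinner (hsub y x0) (hsub y x0) = hinner y (hsub y x0) - hinner x0 (hsub y x0)) by (ip_simpl; ring).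
      rewrite <- hnorm_sq in E.
      assert (Hyx : hnorm (hsub y x0) <= hnorm (hsub p x0)).
      { pose proof (hnorm_pos (hsub y x0)). destruct (Req_dec (hnorm (hsub y x0)) 0). pose proof (hnorm_pos (hsub p x0)); lra.
        apply (Rmult_le_reg_r (hnorm (hsub y x0))). lra. lra. }
      apply (proj_unique F x0 y p HFv); auto. split; auto. intros q Hq.
      rewrite hnorm_sub_sym. eapply Rle_trans. apply Hyx. rewrite hnorm_sub_sym. apply (proj2 Hp q Hq). }
    subst y.
    destruct (Hwc (hsub p x0) (eps0 * eps0 / 4)) as [J HJ]. nra.
    specialize (HJ J (le_n _)). fold (v J) in HJ. unfold Rdist in HJ. apply Rabs_def2 in HJ.
    specialize (Hpsi2 (phi J)). fold (v J) in Hpsi2.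
    assert (E : hinner (hsub (v J) p) (hsub (v J) p) = hinner (hsub (v J) x0) (hsub (v J) x0)
       - 2 * (hinner (v J) (hsub p x0) - hinner x0 (hsub p x0)) + R2).
    { unfold R2. ip_simpl. rewrite ?(hinner_sym x0 (v J)), ?(hinner_sym p (v J)), ?(hinner_sym x0 p). ring. }
    assert (E2 : hinner p (hsub p x0) = R2 + hinner x0 (hsub p x0)) by (unfold R2; ip_simpl; ring).
    pose proof (Hbd (psi (phi J))). fold (v J) in H.
    assert (eps0 * eps0 <= hinner (hsub (v J) p) (hsub (v J) p)) by (rewrite <- hnorm_sq; nra).
    nra.
  - right. destruct N as [m|].
    + right. split; auto. discriminate.
    + left. split; auto. split; auto. intro M. apply NNPP. intro Hno.
      assert (Hinf : forall N0, exists n, (N0 <= n)%nat /\ hnorm (x n) <= M).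
      { intro N0. apply NNPP. intro Hn. apply Hno. exists N0. intros n Hn0. apply Rnot_le_lt.
        intro. apply Hn. eauto. }
      assert (Hbd : forall n, hinner (hsub (x n) x0) (hsub (x n) x0) <= (M + hnorm x0) * (M + hnorm x0)).
      { intro n. destruct (Hinf n) as [m [Hm1 Hm2]].
        assert (hinner (hsub (x n) x0) (hsub (x n) x0) <= hinner (hsub (x m) x0) (hsub (x m) x0)).
        { apply (mono_le (fun n => hinner (hsub (x n) x0) (hsub (x n) x0))); auto.
          apply (run_mono T x0 x Hr). }
        assert (hnorm (hsub (x m) x0) <= M + hnorm x0).
        { unfold hsub. eapply Rle_trans. apply hnorm_tri. rewrite hnorm_opp. lra. }
        pose proof (hnorm_pos (hsub (x m) x0)). rewrite <- (hnorm_sq (hsub (x m) x0)) in H. eapply Rle_trans; [exact H|]. apply Rmult_le_compat; lra. }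
      destruct (run_bounded F T HT x0 x _ Hr Hbd) as [Hw [[y Hy] _]].
      apply HF. exists y. auto.
Qed.
End L.

Theorem theorem10 (X : Hilbert) (F : X -> Prop) (T : nat -> X -> X)
  (HFc : hclosed_set F) (HFv : hconvex_set F) (HT : coherent F T) :
  ( (exists z, F z) ->
    forall (eps : R) (x0 : X), 0 < eps <= 1 ->
    forall x : nat -> X, x 0%nat = x0 ->
      (forall n, x (S n) = hadd (x n) (hscal (2 - eps) (hsub (T n (x n)) (x n)))) ->
      exists p, F p /\ weak_cv x p )
  /\
  ( forall x0 : X,
      (exists (x : nat -> X) (N : option nat), Q_run T x0 x N) /\
      (forall (x : nat -> X) (N : option nat), Q_run T x0 x N ->
         ( (exists z, F z) /\ N = None /\
             exists p, is_proj F x0 p /\ strong_cv x p )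
         \/ ( (~ exists z, F z) /\ N = None /\ cv_infty (fun n => hnorm (x n)) )
         \/ ( (~ exists z, F z) /\ N <> None )) ).
Proof.
  split.
  - apply (part1 F T HT).
  - intro x0. split.
    + apply run_exists.
    + intros x N Hr. apply (run_cases F T HFc HFv HT x0 x N Hr).
Qed.
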